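(* Let $p$ be an odd prime, $q\in\mathbb{C}_p$ with $|q-1|_p<1$, $\alpha\in\mathbb{N}\cup\{0\}$, $h\in\mathbb{N}$. For every integer $n\ge0$ and $x\in\mathbb{Z}_p$, \[ \widetilde{G}_{n+1,q^{-1}}^{(\alpha,h)}(1-x)=(-1)^n q^{h+\alpha n-1}\,\widetilde{G}_{n+1,q}^{(\alpha,h)}(x). \]
   Context: For $x\in\mathbb{Z}_p$ write $[x]_q=\frac{1-q^x}{1-q}$. For a uniformly differentiable $f:\mathbb{Z}_p\to\mathbb{C}_p$, the fermionic $p$-adic $q$-integral is $\int_{\mathbb{Z}_p}f(\xi)\,d\mu_{-q}(\xi)=\lim_{N\to\infty}\frac{1}{[p^N]_{-q}}\sum_{\xi=0}^{p^N-1}f(\xi)(-q)^{\xi}$, with $[p^N]_{-q}=\frac{1+q^{p^N}}{1+q}$. The $(h,q)$-Genocchi polynomials with weight $\alpha$ are defined for $n\ge0$, $x\in\mathbb{Z}_p$ by $\frac{\widetilde{G}_{n+1,q}^{(\alpha,h)}(x)}{n+1}=\int_{\mathbb{Z}_p}q^{(h-1)\xi}[x+\xi]_{q^{\alpha}}^n\,d\mu_{-q}(\xi)$. The objects with $q^{-1}$ are obtained by replacing $q$ by $q^{-1}$ everywhere, i.e. $\frac{\widetilde{G}_{n+1,q^{-1}}^{(\alpha,h)}(x)}{n+1}=\int_{\mathbb{Z}_p}q^{(1-h)\xi}[x+\xi]_{q^{-\alpha}}^n\,d\mu_{-q^{-1}}(\xi)$. *)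

(* Defs.v *)
From HB Require Import structures.
From mathcomp Require Import all_boot all_order all_algebra.
From mathcomp Require Import reals.
From Stdlib Require Import ClassicalEpsilon.
Set Implicit Arguments. Unset Strict Implicit. Unset Printing Implicit Defensive.
Import Order.TTheory GRing.Theory Num.Theory.
Local Open Scope ring_scope.

Section PAdic.
Variables (R : realType) (K : fieldType) (nK : K -> R).

Record is_nonarch_abs : Prop := {
  abs_ge0 : forall x, 0 <= nK x;
  abs_eq0 : forall x, nK x = 0 <-> x = 0;
  abs_mul : forall x y, nK (x * y) = nK x * nK y;
  abs_ultra : forall x y, nK (x + y) <= Num.max (nK x) (nK y) }.

Definition cvg_to (u : nat -> K) (l : K) : Prop :=
  forall e : R, 0 < e -> exists N, forall m, (N <= m)%N -> nK (u m - l) < e.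

Definition cauchy (u : nat -> K) : Prop :=
  forall e : R, 0 < e -> exists N, forall m k, (N <= m)%N -> (N <= k)%N ->
    nK (u m - u k) < e.

(* (K, nK) is a model of C_p: an algebraically closed field, complete for a
   non-archimedean absolute value whose restriction to the integers is the
   normalized p-adic absolute value |n|_p = p^(-v_p(n)). *)
Record Cp_like (p : nat) : Prop := {
  Cp_abs : is_nonarch_abs;
  Cp_closed : GRing.closed_field_axiom K;
  Cp_complete : forall u, cauchy u -> exists l, cvg_to u l;
  Cp_padic : forall n : nat, (0 < n)%N -> nK n%:R = (p%:R ^- logn p n) }.

(* Z_p, viewed inside K, is the closure of the natural numbers. *)
Definition in_Zp (x : K) : Prop :=
  forall e : R, 0 < e -> exists n : nat, nK (x - n%:R) < e.

(* the limit of a sequence (if it converges; 0 otherwise) *)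
Definition limK (u : nat -> K) : K :=
  epsilon (inhabits 0) (fun l => cvg_to u l).

(* q^x for x in Z_p: the value at x of the continuous extension of n |-> q^n *)
Definition qpow (q x : K) : K :=
  epsilon (inhabits 0) (fun l => forall e : R, 0 < e -> exists2 d : R, 0 < d &
    forall n : nat, nK (x - n%:R) < d -> nK (q ^+ n - l) < e).

Definition qnum (q x : K) : K :=
  if q == 1 then x else (1 - qpow q x) / (1 - q).

(* fermionic p-adic q-integral, f evaluated on the naturals xi = 0..p^N-1:
   lim_N 1/[p^N]_{-q} * sum_{xi < p^N} f(xi) (-q)^xi,
   with [p^N]_{-q} = (1 + q^(p^N)) / (1 + q) *)
Definition fint (p : nat) (q : K) (f : nat -> K) : K :=
  limK (fun N => ((1 + q) / (1 + q ^+ (p ^ N))) *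
                 \sum_(xi < p ^ N) f xi * (- q) ^+ xi).

(* (h,q)-Genocchi polynomial with weight alpha:
   G_{n+1,q}^{(alpha,h)}(x) = (n+1) * int q^{(h-1) xi} [x+xi]_{q^alpha}^n dmu_{-q} *)
Definition Gt (p : nat) (q : K) (alpha h n : nat) (x : K) : K :=
  n.+1%:R * fint p q (fun xi => q ^+ ((h - 1) * xi) *
                               (qnum (q ^+ alpha) (x + xi%:R)) ^+ n).

End PAdic.

(* Main.v *)
Require Import Defs.
From HB Require Import structures.
From mathcomp Require Import all_boot all_order all_algebra.
From mathcomp Require Import reals.
From mathcomp Require Import ring lra zify.
From Stdlib Require Import ClassicalEpsilon.
Set Implicit Arguments. Unset Strict Implicit. Unset Printing Implicit Defensive.
Import Order.TTheory GRing.Theory Num.Theory.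
Local Open Scope ring_scope.



Section Basic.
Variables (R : realType) (K : fieldType) (nK : K -> R) (p : nat).
Hypothesis hp : prime p.
Hypothesis hodd : odd p.
Hypothesis hK : Cp_like nK p.

Lemma nK_ge0 x : 0 <= nK x. Proof. exact: abs_ge0 (Cp_abs hK) x. Qed.
Lemma nK0 : nK 0 = 0. Proof. by apply/(abs_eq0 (Cp_abs hK)). Qed.
Lemma nK_eq0 x : (nK x == 0) = (x == 0).
Proof. apply/eqP/eqP => [/(abs_eq0 (Cp_abs hK))//|->]; exact: nK0. Qed.
Lemma nKM x y : nK (x * y) = nK x * nK y. Proof. exact: (abs_mul (Cp_abs hK) x y). Qed.
Lemma nKD x y : nK (x + y) <= Num.max (nK x) (nK y). Proof. exact: (abs_ultra (Cp_abs hK) x y). Qed.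

Lemma nK1 : nK 1 = 1.
Proof.
have h1 : nK 1 != 0 by rewrite nK_eq0 oner_eq0.
have := nKM 1 1; rewrite mulr1 => /eqP; rewrite -{1}[nK 1]mulr1 (inj_eq (mulfI h1)).
by move/eqP <-.
Qed.

Lemma nKN1 : nK (-1) = 1.
Proof.
have := nKM (-1) (-1); rewrite mulrNN mulr1 nK1 => h.
apply/eqP; rewrite -(@eqrXn2 _ 2) ?nK_ge0 // expr2 -h expr1n //.
Qed.

Lemma nKN x : nK (- x) = nK x.
Proof. by rewrite -mulN1r nKM nKN1 mul1r. Qed.

Lemma nKX x m : nK (x ^+ m) = nK x ^+ m.
Proof. elim: m => [|m IH]; by rewrite ?expr0 ?nK1 // !exprS nKM IH. Qed.

Lemma nKV x : nK (x^-1) = (nK x)^-1.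
Proof.
have [->|x0] := eqVneq x 0; first by rewrite invr0 nK0 invr0.
have nx : nK x != 0 by rewrite nK_eq0.
apply: (mulfI nx); rewrite -nKM mulfV // mulfV // nK1 //.
Qed.

Lemma nKD_le x y M : nK x <= M -> nK y <= M -> nK (x + y) <= M.
Proof. move=> hx hy; apply: le_trans (nKD x y) _; by rewrite ge_max hx hy. Qed.

Lemma nKB x y : nK (x - y) = nK (y - x).
Proof. by rewrite -nKN opprB. Qed.

Lemma nKB_le x y M : nK x <= M -> nK y <= M -> nK (x - y) <= M.
Proof. by move=> hx hy; apply: nKD_le => //; rewrite nKN. Qed.

Lemma nK_tri x y z M : nK (x - y) <= M -> nK (y - z) <= M -> nK (x - z) <= M.
Proof. move=> h1 h2; have -> : x - z = (x - y) + (y - z) by rewrite addrA subrK. exact: nKD_le. Qed.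

Lemma nK_tri_lt x y z M : nK (x - y) < M -> nK (y - z) < M -> nK (x - z) < M.
Proof.
move=> h1 h2; have -> : x - z = (x - y) + (y - z) by rewrite addrA subrK.
apply: le_lt_trans (nKD _ _) _; by rewrite gt_max h1 h2.
Qed.

Lemma nK_sum_le (I : Type) (r : seq I) (P : pred I) (F : I -> K) M :
  0 <= M -> (forall i, P i -> nK (F i) <= M) -> nK (\sum_(i <- r | P i) F i) <= M.
Proof.
move=> M0 hF; apply: (big_ind (fun y => nK y <= M)) => //; first by rewrite nK0.
by move=> a b; apply: nKD_le.
Qed.

Lemma nK_strict a b : nK b < nK a -> nK (a + b) = nK a.
Proof.
move=> hab; apply/eqP; rewrite eq_le; apply/andP; split.
  by apply: le_trans (nKD a b) _; rewrite ge_max lexx ltW.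
have := nKD (a + b) (- b); rewrite addrK nKN.
rewrite le_max => /orP[//|h3].
by move: (le_lt_trans h3 hab); rewrite ltxx.
Qed.

Lemma p_gt1 : (1 < p)%N. Proof. exact: prime_gt1. Qed.

Definition pinv : R := (p%:R)^-1.

Lemma pinv_gt0 : 0 < pinv.
Proof. by rewrite /pinv invr_gt0 ltr0n prime_gt0. Qed.

Lemma pinv_lt1 : pinv < 1.
Proof.
rewrite /pinv invf_lt1 ?ltr0n ?prime_gt0 //.
by rewrite ltr1n p_gt1.
Qed.

Lemma nK_natr_expN k : (0 < k)%N -> nK k%:R = pinv ^+ logn p k.
Proof. by move=> k0; rewrite (Cp_padic hK k0) /pinv exprVn. Qed.

Lemma nK_natr_le1 k : nK k%:R <= 1.
Proof.
case: k => [|k]; first by rewrite nK0 ler01.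
rewrite nK_natr_expN // exprn_ile1 // ?ltW ?pinv_gt0 ?pinv_lt1 //.
Qed.

Lemma nK_p : nK p%:R = pinv.
Proof. by rewrite nK_natr_expN ?prime_gt0 // logn_prime // eqxx expr1. Qed.

Lemma nK_pX N : nK (p ^ N)%:R = pinv ^+ N.
Proof. by rewrite natrX nKX nK_p. Qed.

Lemma nK2 : nK 2 = 1.
Proof.
rewrite -[2]/(2%:R) nK_natr_expN //.
suff -> : logn p 2 = 0%N by rewrite expr0.
rewrite logn_prime //.
case: eqP => // hp2; move: hodd; by rewrite hp2.
Qed.

Lemma nK_small_dvd k N : nK k%:R < pinv ^+ N -> (p ^ N %| k)%N.
Proof.
case: k => [|k] h; first by rewrite dvdn0.
rewrite pfactor_dvdn //; move: h; rewrite nK_natr_expN //.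
rewrite ltr_iXn2l ?pinv_gt0 ?pinv_lt1 //; exact: ltnW.
Qed.

Lemma pow_small (c e : R) : 0 <= c -> c < 1 -> 0 < e -> exists N, c ^+ N < e.
Proof.
move=> c0 c1 e0.
have [->|cn0] := eqVneq c 0; first by exists 1%N; rewrite expr1.
have cp : 0 < c by rewrite lt_neqAle eq_sym cn0 c0.
set d := c^-1 - 1.
have d0 : 0 < d by rewrite /d subr_gt0 invf_gt1.
have bern : forall N, 1 + N%:R * d <= c^-1 ^+ N.
  have hy : 1 <= c^-1 by rewrite invf_ge1 // ltW.
  have : c^-1 = 1 + d by rewrite /d addrC subrK.
  move: hy; move: (c^-1) => y hy ->.
  elim=> [|N IH]; first by rewrite mul0r addr0 expr0.
  rewrite exprS -natr1 mulrDl mul1r.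
  have h1 : 1 <= (1 + d) ^+ N by apply: exprn_ege1; rewrite lerDl ltW.
  move: IH h1; set A := (1 + d) ^+ N; set Nd := N%:R * d => IH h1.
  have : 0 <= d * (A - 1) by apply: mulr_ge0; [exact: ltW | rewrite subr_ge0].
  nra.
set B := Num.bound ((e * d)^-1).
have hB : (e * d)^-1 < B%:R by apply: archi_boundP; rewrite invr_ge0 mulr_ge0 ?ltW.
exists B.
have hcB : 0 < c^-1 ^+ B by rewrite exprn_gt0 // invr_gt0.
have hed : 0 < e * d by apply: mulr_gt0.
have h1 : 1 < B%:R * (e * d).
  by rewrite -(ltr_pM2r hed) mulVf ?gt_eqF // in hB.
rewrite -[c]invrK exprVn -(ltr_pM2l hcB) mulfV ?gt_eqF //.
have := bern B; move: hcB h1; set A := c^-1 ^+ B; set b := B%:R => ? ? ?.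
nra.
Qed.

End Basic.



Section Geo.
Variables (R : realType) (K : fieldType) (nK : K -> R) (p : nat).
Hypothesis hp : prime p.
Hypothesis hK : Cp_like nK p.

Lemma nK_unit t : nK (t - 1) < 1 -> nK t = 1.
Proof.
move=> h; have -> : t = 1 + (t - 1) by rewrite addrC subrK.
by rewrite (nK_strict hK) (nK1 hK) // (nK1 hK).
Qed.

Lemma unit_neq0 t : nK (t - 1) < 1 -> t != 0.
Proof. by move=> h; rewrite -(nK_eq0 hK) nK_unit // oner_eq0. Qed.

Lemma nK_inv_sub1 t : nK (t - 1) < 1 -> nK (t^-1 - 1) = nK (t - 1).
Proof.
move=> h; have t0 := unit_neq0 h.
have -> : t^-1 - 1 = t^-1 * (1 - t) by rewrite mulrBr mulr1 mulVf.
by rewrite (nKM hK) (nKV hK) nK_unit // invr1 mul1r (nKB hK).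
Qed.

Definition g (t : K) (m : nat) : K := \sum_(i < m) t ^+ i.

Lemma g_sub1 t m : (t - 1) * g t m = t ^+ m - 1.
Proof.
elim: m => [|m IH]; first by rewrite /g big_ord0 mulr0 expr0 subrr.
by rewrite /g big_ord_recr /= mulrDr -/(g t m) IH exprS; ring.
Qed.

Lemma gS t b : g t b.+1 = 1 + t * g t b.
Proof.
rewrite /g big_ord_recl expr0 mulr_sumr; congr (_ + _).
by apply: eq_bigr => i _; rewrite /bump /= exprS.
Qed.

Lemma g_mul t a b : g t (a * b) = g t a * g (t ^+ a) b.
Proof.
elim: b => [|b IH]; first by rewrite muln0 /g !big_ord0 mulr0.
rewrite mulnS gS /g big_split_ord /= -/(g t a).
have -> : \sum_(i < a * b) t ^+ (a + i) = t ^+ a * g t (a * b).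
  by rewrite /g mulr_sumr; apply: eq_bigr => i _; rewrite exprD.
by rewrite IH -/(g (t ^+ a) b); ring.
Qed.

Lemma g_le1 t m : nK (t - 1) < 1 -> nK (g t m) <= 1.
Proof.
move=> h; apply: (nK_sum_le hK) => // i _.
by rewrite (nKX hK) nK_unit // expr1n.
Qed.

Lemma Xsub1_le t m : nK (t - 1) < 1 -> nK (t ^+ m - 1) <= nK (t - 1).
Proof.
move=> h; rewrite -g_sub1 (nKM hK).
by rewrite ler_piMr ?(nK_ge0 hK) // g_le1.
Qed.

Lemma X_unit t m : nK (t - 1) < 1 -> nK (t ^+ m - 1) < 1.
Proof. by move=> h; apply: le_lt_trans (Xsub1_le m h) h. Qed.

Variables (t : K) (b : R).
Hypothesis htb : nK (t - 1) <= b.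
Hypothesis hb1 : b < 1.

Definition cc : R := Num.max (pinv R p) b.

Lemma ht1 : nK (t - 1) < 1. Proof. exact: le_lt_trans htb hb1. Qed.

Lemma cc_ge0 : 0 <= cc.
Proof. by rewrite le_max ltW // (pinv_gt0 R hp). Qed.

Lemma cc_lt1 : cc < 1.
Proof. by rewrite gt_max hb1 (pinv_lt1 R hp). Qed.

Lemma g_p_bound u : nK (u - 1) <= b -> nK (g u p) <= cc.
Proof.
move=> hu.
have -> : g u p = p%:R + \sum_(i < p) (u ^+ i - 1).
  by rewrite sumrB sumr_const card_ord /g addrC subrK.
apply: (nKD_le hK) => //; first by rewrite (nK_p hp hK) le_max lexx.
apply: (nK_sum_le hK) => [|i _]; first exact: cc_ge0.
apply: le_trans (Xsub1_le _ (le_lt_trans hu hb1)) _.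
by apply: le_trans hu _; rewrite le_max lexx orbT.
Qed.

Lemma g_pX_bound N : nK (g t (p ^ N)) <= cc ^+ N.
Proof.
elim: N => [|N IH]; first by rewrite expn0 /g big_ord1 (nK1 hK) expr0.
rewrite expnSr g_mul (nKM hK) exprSr.
apply: ler_pM; [exact: (nK_ge0 hK) | exact: (nK_ge0 hK) | exact: IH | ].
apply: g_p_bound; apply: le_trans (Xsub1_le _ ht1) htb.
Qed.

Lemma g_mul_le P j : nK (g t (P * j)) <= nK (g t P).
Proof.
rewrite g_mul (nKM hK) ler_piMr ?(nK_ge0 hK) //.
by apply: g_le1; apply: X_unit ht1.
Qed.

Lemma XpN_sub1 N : nK (t ^+ (p ^ N) - 1) <= cc ^+ N.
Proof.
rewrite -g_sub1 (nKM hK); apply: le_trans (g_pX_bound N).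
by rewrite ler_piMl ?(nK_ge0 hK) // ltW // ht1.
Qed.

Lemma Xsub1_small a N : nK a%:R < pinv R p ^+ N -> nK (t ^+ a - 1) <= cc ^+ N.
Proof.
move=> /(nK_small_dvd hp hK) /dvdnP [m ->].
rewrite mulnC -g_sub1 (nKM hK); apply: le_trans (g_pX_bound N).
apply: le_trans (_ : nK (g t (p ^ N * m)) <= _); last exact: g_mul_le.
by rewrite ler_piMl ?(nK_ge0 hK) // ltW // ht1.
Qed.

Lemma tpow_close n m N : nK (n%:R - m%:R) < pinv R p ^+ N ->
  nK (t ^+ n - t ^+ m) <= cc ^+ N.
Proof.
wlog hmn : n m / (m <= n)%N.
  move=> W; case: (leqP m n) => h; first exact: W.
  by rewrite (nKB hK) => h2; rewrite (nKB hK); apply: W => //; exact: ltnW.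
move=> h; rewrite -(subnK hmn) exprD -{2}[t ^+ m]mul1r -mulrBl (nKM hK).
rewrite (nKX hK) (nK_unit ht1) expr1n mulr1.
by apply: Xsub1_small; rewrite natrB.
Qed.

End Geo.



Section Qpow.
Variables (R : realType) (K : fieldType) (nK : K -> R) (p : nat).
Hypothesis hp : prime p.
Hypothesis hK : Cp_like nK p.

Definition qspec (t y l : K) := forall e : R, 0 < e -> exists2 d : R, 0 < d &
    forall n : nat, nK (y - n%:R) < d -> nK (t ^+ n - l) < e.

Lemma small_eq a b : (forall e : R, 0 < e -> nK (a - b) < e) -> a = b.
Proof.
move=> h; apply/eqP; rewrite -subr_eq0 -(nK_eq0 hK); apply/negPn/negP => hn.
have hpos : 0 < nK (a - b) by rewrite lt_neqAle eq_sym hn (nK_ge0 hK).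
by move: (h _ hpos); rewrite ltxx.
Qed.

Lemma in_Zp_nat m : in_Zp nK m%:R.
Proof. by move=> e e0; exists m; rewrite subrr (nK0 hK). Qed.

Lemma in_Zp_addn y m : in_Zp nK y -> in_Zp nK (y + m%:R).
Proof.
move=> hy e e0; have [n hn] := hy e e0; exists (n + m)%N.
by rewrite natrD opprD addrACA subrr addr0.
Qed.

Lemma pinv_small e : 0 < e -> exists N, pinv R p ^+ N < e.
Proof.
move=> e0; apply: (pow_small (ltW (pinv_gt0 R hp)) (pinv_lt1 R hp) e0).
Qed.

Lemma in_Zp_natB y m : in_Zp nK y -> in_Zp nK (m%:R - y).
Proof.
move=> hy e e0; have [n hn] := hy e e0; have [N hN] := pinv_small e0.
set Kx := (N + n)%N.
have hKn : (n <= p ^ Kx)%N.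
  apply: (@leq_trans Kx); [by rewrite /Kx leq_addl | exact: ltnW (ltn_expl Kx (prime_gt1 hp))].
exists (m + (p ^ Kx - n))%N.
have -> : m%:R - y - (m + (p ^ Kx - n))%:R = (n%:R - y) - (p ^ Kx)%:R :> K.
  by rewrite natrD natrB //; ring.
apply: le_lt_trans (nKD hK _ _) _; rewrite gt_max (nKB hK) hn /=.
rewrite (nKN hK) (nK_pX hp hK); apply: le_lt_trans hN.
rewrite ler_wiXn2l ?(ltW (pinv_lt1 R hp)) ?(ltW (pinv_gt0 R hp)) //.
by rewrite /Kx leq_addr.
Qed.

Variables (t : K) (b : R).
Hypothesis htb : nK (t - 1) <= b.
Hypothesis hb1 : b < 1.

Let c := cc p b.

Lemma qspec_unique y l1 l2 : in_Zp nK y -> qspec t y l1 -> qspec t y l2 -> l1 = l2.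
Proof.
move=> hy h1 h2; apply: small_eq => e e0.
have [d1 d10 hd1] := h1 e e0; have [d2 d20 hd2] := h2 e e0.
have hm0 : 0 < Num.min d1 d2 by rewrite lt_min d10 d20.
have [n hn] := hy (Num.min d1 d2) hm0.
move: hn; rewrite lt_min => /andP[hn1 hn2].
have := hd1 _ hn1; have := hd2 _ hn2 => a2 a1.
by apply: (nK_tri_lt hK) (_ : nK (t ^+ n - l2) < e) => //; rewrite (nKB hK).
Qed.

Lemma qpow_exists y : in_Zp nK y -> exists l, qspec t y l.
Proof.
move=> hy.
have hu : forall k : nat, {n : nat | nK (y - n%:R) < pinv R p ^+ k}.
  move=> k; apply: constructive_indefinite_description.
  by apply: hy; rewrite exprn_gt0 // (pinv_gt0 R hp).
pose u k := sval (hu k).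
have hu1 : forall k, nK (y - (u k)%:R) < pinv R p ^+ k by move=> k; exact: svalP (hu k).
have close : forall N n m, (N <= m)%N -> nK (y - n%:R) < pinv R p ^+ N ->
    nK (t ^+ n - t ^+ u m) <= c ^+ N.
  move=> N n m hm hn; apply: (tpow_close hp hK htb hb1).
  have -> : n%:R - (u m)%:R = (y - (u m)%:R) - (y - n%:R) :> K by ring.
  apply: le_lt_trans (nKD hK _ _) _; rewrite gt_max (nKN hK) hn andbT.
  apply: lt_le_trans (hu1 m) _.
  by rewrite ler_wiXn2l ?(ltW (pinv_lt1 R hp)) ?(ltW (pinv_gt0 R hp)).
have [l hl] : exists l, cvg_to nK (fun k => t ^+ u k) l.
  apply: (Cp_complete hK) => e e0.
  have [N hN] := pow_small (cc_ge0 hp b) (cc_lt1 hp hb1) e0.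
  exists N => m k hm hk; apply: le_lt_trans hN.
  apply: close hk _; apply: lt_le_trans (hu1 m) _.
  by rewrite ler_wiXn2l ?(ltW (pinv_lt1 R hp)) ?(ltW (pinv_gt0 R hp)).
exists l => e e0.
have [N hN] := pow_small (cc_ge0 hp b) (cc_lt1 hp hb1) e0.
exists (pinv R p ^+ N); first by rewrite exprn_gt0 // (pinv_gt0 R hp).
move=> n hn; have [M hM] := hl e e0.
have hm := hM (maxn M N) (leq_maxl _ _).
have hc := close N n (maxn M N) (leq_maxr _ _) hn.
have -> : t ^+ n - l = (t ^+ n - t ^+ u (maxn M N)) + (t ^+ u (maxn M N) - l) by rewrite addrA subrK.
apply: le_lt_trans (nKD hK _ _) _; rewrite gt_max hm andbT.
exact: le_lt_trans hc hN.
Qed.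

Lemma qpow_spec y : in_Zp nK y -> qspec t y (qpow nK t y).
Proof.
move=> hy; rewrite /qpow; apply: (epsilon_spec (inhabits 0) (qspec t y)).
exact: qpow_exists.
Qed.

Lemma qpow_eq y l : in_Zp nK y -> qspec t y l -> qpow nK t y = l.
Proof. by move=> hy hl; apply: (qspec_unique hy) => //; apply: qpow_spec. Qed.

Lemma qpow_near1 y : in_Zp nK y -> nK (qpow nK t y - 1) <= nK (t - 1).
Proof.
move=> hy; set E := qpow nK t y.
rewrite leNgt; apply/negP => hlt.
have e0 : 0 < nK (E - 1) by exact: (le_lt_trans (nK_ge0 hK _) hlt).
have [d d0 hd] := qpow_spec hy e0.
have [n hn] := hy d d0.
have h1 := hd n hn.
have h2 : nK (t ^+ n - 1) < nK (E - 1) by apply: le_lt_trans hlt; exact: (Xsub1_le hK n (ht1 htb hb1)).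
have : nK (E - 1) < nK (E - 1).
  by apply: (nK_tri_lt hK) h2; rewrite (nKB hK).
by rewrite ltxx.
Qed.

Lemma qpow_shift y m : in_Zp nK y -> qpow nK t (y + m%:R) = t ^+ m * qpow nK t y.
Proof.
move=> hy; apply: small_eq => e e0.
have hym := in_Zp_addn m hy.
have [d1 d10 hd1] := qpow_spec hy e0; have [d2 d20 hd2] := qpow_spec hym e0.
have hm0 : 0 < Num.min d1 d2 by rewrite lt_min d10 d20.
have [n hn] := hy (Num.min d1 d2) hm0.
move: hn; rewrite lt_min => /andP[hn1 hn2].
have a1 := hd1 _ hn1.
have a2 : nK (t ^+ (n + m) - qpow nK t (y + m%:R)) < e.
  by apply: hd2; rewrite natrD opprD addrACA subrr addr0.
apply: (nK_tri_lt hK) (_ : nK (t ^+ (n + m) - t ^+ m * qpow nK t y) < e).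
  by rewrite (nKB hK).
rewrite exprD mulrC -mulrBr (nKM hK) (nKX hK) (nK_unit hK (ht1 htb hb1)) expr1n mul1r.
exact: a1.
Qed.

End Qpow.



Section Refl.
Variables (R : realType) (K : fieldType) (nK : K -> R) (p : nat).
Hypothesis hp : prime p.
Hypothesis hK : Cp_like nK p.

Lemma in_Zp_le1 y : in_Zp nK y -> nK y <= 1.
Proof.
move=> hy; rewrite leNgt; apply/negP => h.
have e0 : 0 < nK y - 1 by rewrite subr_gt0.
have [n hn] := hy _ e0.
have : nK y <= Num.max (nK (y - n%:R)) (nK n%:R) by rewrite -{1}[y](subrK n%:R) (nKD hK).
have := nK_natr_le1 hp hK n.
rewrite le_max => h3 /orP[] h2; lra.
Qed.

Variables (t : K) (b : R).
Hypothesis htb : nK (t - 1) <= b.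
Hypothesis hb1 : b < 1.

Lemma htb' : nK (t^-1 - 1) <= b.
Proof. by rewrite (nK_inv_sub1 hK (ht1 htb hb1)). Qed.

Lemma qpow_refl y P : in_Zp nK y ->
  qpow nK (t^-1) (P%:R - y) = (t^-1) ^+ P * qpow nK t y.
Proof.
move=> hy; apply: (small_eq hK) => e e0.
have t0 : t != 0 := unit_neq0 hK (ht1 htb hb1).
have hPy := in_Zp_natB hp hK P hy.
have [d1 d10 hd1] := qpow_spec hp hK htb hb1 hy e0.
have [d2 d20 hd2] := qpow_spec hp hK htb' hb1 hPy e0.
have hm0 : 0 < Num.min d1 d2 by rewrite lt_min d10 d20.
have [n hn] := hy (Num.min d1 d2) hm0.
move: hn; rewrite lt_min => /andP[hn1 hn2].
have [K0 hK0] := pinv_small hp d20.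
have [K1 hK1] := pow_small (cc_ge0 hp b) (cc_lt1 hp hb1) e0.
set Kx := (K0 + K1 + n)%N.
have hKn : (n <= p ^ Kx)%N.
  apply: (@leq_trans Kx); [by rewrite /Kx leq_addl | exact: ltnW (ltn_expl Kx (prime_gt1 hp))].
have pKle : forall M, (M <= Kx)%N -> pinv R p ^+ Kx <= pinv R p ^+ M.
  by move=> M hM; rewrite ler_wiXn2l ?(ltW (pinv_lt1 R hp)) ?(ltW (pinv_gt0 R hp)).
have ccle : forall M, (M <= Kx)%N -> cc p b ^+ Kx <= cc p b ^+ M.
  by move=> M hM; rewrite ler_wiXn2l ?(ltW (cc_lt1 hp hb1)) ?(cc_ge0 hp b).
set k := (P + (p ^ Kx - n))%N.
have a1 := hd1 _ hn1.
have a2 : nK (t^-1 ^+ k - qpow nK t^-1 (P%:R - y)) < e.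
  apply: hd2.
  have -> : P%:R - y - k%:R = (n%:R - y) - (p ^ Kx)%:R :> K.
    by rewrite /k natrD natrB //; ring.
  apply: le_lt_trans (nKD hK _ _) _; rewrite gt_max (nKB hK) hn2 /=.
  rewrite (nKN hK) (nK_pX hp hK); apply: le_lt_trans hK0.
  by apply: pKle; rewrite /Kx -addnA leq_addr.
apply: (nK_tri_lt hK) (_ : nK (t^-1 ^+ k - t^-1 ^+ P * qpow nK t y) < e).
  by rewrite (nKB hK).
have -> : t^-1 ^+ k = t^-1 ^+ P * (t^-1 ^+ (p ^ Kx) * t ^+ n).
  rewrite /k exprD exprB // ?unitfE ?invr_eq0 //; congr (_ * (_ * _)).
  by rewrite exprVn invrK.
rewrite -mulrBr (nKM hK) (nKX hK) (nK_unit hK (ht1 htb' hb1)) expr1n mul1r.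
have -> : t^-1 ^+ (p ^ Kx) * t ^+ n - qpow nK t y =
  t ^+ n * (t^-1 ^+ (p ^ Kx) - 1) + (t ^+ n - qpow nK t y) by ring.
apply: le_lt_trans (nKD hK _ _) _; rewrite gt_max a1 andbT.
rewrite (nKM hK) (nKX hK) (nK_unit hK (ht1 htb hb1)) expr1n mul1r.
apply: le_lt_trans (XpN_sub1 hp hK htb' hb1 Kx) _.
apply: le_lt_trans hK1; apply: ccle.
by rewrite /Kx -addnA addnCA leq_addr.
Qed.

End Refl.

Section Qnum.
Variables (R : realType) (K : fieldType) (nK : K -> R) (p : nat).
Hypothesis hp : prime p.
Hypothesis hK : Cp_like nK p.
Variable s : K.
Hypothesis hs : nK (s - 1) < 1.

Lemma g1 m : g 1 m = m%:R :> K.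
Proof. by rewrite /g (eq_bigr (fun _ => 1)) ?sumr_const ?card_ord // => i _; rewrite expr1n. Qed.

Lemma qpowE_le1 y : in_Zp nK y -> nK (qpow nK s y) <= 1.
Proof.
move=> hy; have h := qpow_near1 hp hK (lexx (nK (s - 1))) hs hy.
rewrite -[qpow nK s y](subrK 1); apply: (nKD_le hK); last by rewrite (nK1 hK).
exact: le_trans h (ltW hs).
Qed.

Lemma qnum_le1 y : in_Zp nK y -> nK (qnum nK s y) <= 1.
Proof.
move=> hy; rewrite /qnum; case: eqP => [_|s1]; first exact: (in_Zp_le1 hp hK hy).
have hs1 : 1 - s != 0 by rewrite subr_eq0 eq_sym; apply/eqP.
have hn : 0 < nK (1 - s) by rewrite lt_neqAle eq_sym (nK_eq0 hK) hs1 (nK_ge0 hK).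
rewrite (nKM hK) (nKV hK) ler_pdivrMr // mul1r (nKB hK) [nK (1 - s)](nKB hK).
exact: (qpow_near1 hp hK (lexx (nK (s - 1))) hs hy).
Qed.

Lemma qnum_shift y m : in_Zp nK y ->
  nK (qnum nK s (y + m%:R) - qnum nK s y) <= nK (g s m).
Proof.
move=> hy; rewrite /qnum; case: eqP => [->|s1].
  by rewrite g1 addrC addKr.
have hs1 : 1 - s != 0 by rewrite subr_eq0 eq_sym; apply/eqP.
rewrite (qpow_shift hp hK (lexx (nK (s - 1))) hs _ hy).
have hg : g s m = (1 - s ^+ m) / (1 - s).
  apply: (mulIf hs1); rewrite divfK // mulrC -[1 - s]opprB mulNr g_sub1 opprB //.
have -> : (1 - s ^+ m * qpow nK s y) / (1 - s) - (1 - qpow nK s y) / (1 - s)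
   = qpow nK s y * g s m by rewrite hg; field.
by rewrite (nKM hK) ler_piMl ?(nK_ge0 hK) // qpowE_le1.
Qed.

Lemma qnum_refl y P : in_Zp nK y ->
  nK (qnum nK (s^-1) (P%:R - y) + s * qnum nK s y) <= nK (g (s^-1) P).
Proof.
move=> hy; rewrite /qnum.
case: (eqVneq s 1) => [->|s1].
  by rewrite invr1 eqxx mul1r g1 subrK.
have s0 : s != 0 := unit_neq0 hK hs.
have si1 : (s^-1 == 1) = false.
  by apply/negbTE; apply: contra s1 => /eqP h; rewrite -[s]invrK h invr1.
rewrite si1.
rewrite (qpow_refl hp hK (lexx (nK (s - 1))) hs _ hy).
have hs1 : 1 - s != 0 by rewrite subr_eq0 eq_sym.
have hsi1 : 1 - s^-1 != 0 by rewrite subr_eq0 eq_sym si1.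
have hg : g (s^-1) P = (1 - s^-1 ^+ P) / (1 - s^-1).
  apply: (mulIf hsi1); rewrite divfK // mulrC -[1 - s^-1]opprB mulNr g_sub1 opprB //.
have -> : (1 - s^-1 ^+ P * qpow nK s y) / (1 - s^-1) + s * ((1 - qpow nK s y) / (1 - s))
   = qpow nK s y * g (s^-1) P.
  rewrite hg; field.
  by rewrite s0 hs1 subr_eq0 s1.
by rewrite (nKM hK) ler_piMl ?(nK_ge0 hK) // qpowE_le1.
Qed.

End Qnum.



Lemma blocks (K : fieldType) (F : nat -> K) P m :
  \sum_(k < P * m) F k = \sum_(j < m) \sum_(i < P) F (i + P * j)%N.
Proof.
elim: m => [|m IH]; first by rewrite muln0 !big_ord0.
rewrite mulnSr big_split_ord /= IH big_ord_recr /=; congr (_ + _).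
by apply: eq_bigr => i _; rewrite addnC.
Qed.

Section Fint.
Variables (R : realType) (K : fieldType) (nK : K -> R) (p : nat).
Hypothesis hp : prime p.
Hypothesis hodd : odd p.
Hypothesis hK : Cp_like nK p.
Variable q : K.
Hypothesis hq : nK (q - 1) < 1.

Let b := nK (q - 1).
Let c := cc p b.

Lemma c_ge0 : 0 <= c. Proof. exact: cc_ge0 hp b. Qed.
Lemma c_lt1 : c < 1. Proof. by rewrite /c /cc gt_max hq (pinv_lt1 R hp). Qed.
Lemma c_mono M N : (M <= N)%N -> c ^+ N <= c ^+ M.
Proof. by move=> h; rewrite ler_wiXn2l // ?c_ge0 // ltW // c_lt1. Qed.

Lemma one_plus v : nK (v - 1) < 1 -> nK (1 + v) = 1.
Proof.
move=> h; have -> : 1 + v = 2 + (v - 1) by ring.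
by rewrite (nK_strict hK) (nK2 hodd hK) //.
Qed.

Lemma one_plus_neq0 v : nK (v - 1) < 1 -> 1 + v != 0.
Proof. by move=> h; rewrite -(nK_eq0 hK) one_plus // oner_eq0. Qed.

Lemma nK_qX m : nK (q ^+ m) = 1.
Proof. by rewrite (nKX hK) (nK_unit hK hq) expr1n. Qed.

Lemma nK_mqX m : nK ((- q) ^+ m) = 1.
Proof. by rewrite (nKX hK) (nKN hK) (nK_unit hK hq) expr1n. Qed.

Definition Bsq (f : nat -> K) (N : nat) : K :=
  ((1 + q) / (1 + q ^+ (p ^ N))) * \sum_(xi < p ^ N) f xi * (- q) ^+ xi.

Variable f : nat -> K.
Hypothesis hf1 : forall xi, nK (f xi) <= 1.
Hypothesis hf2 : forall N xi j, nK (f (xi + p ^ N * j)%N - f xi) <= c ^+ N.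

Lemma Bstep N : nK (Bsq f N.+1 - Bsq f N) <= c ^+ N.
Proof.
rewrite /Bsq.
set P := (p ^ N)%N; set u := q ^+ P.
have Podd : odd P by rewrite /P oddX hodd orbT.
have hu : nK (u - 1) < 1 by exact: (X_unit hK P hq).
have mq : (- q) ^+ P = - u by rewrite exprNn -signr_odd Podd expr1 mulN1r.
set S := \sum_(xi < P) f xi * (- q) ^+ xi.
set Err := \sum_(j < p) \sum_(i < P) (f (i + P * j)%N - f i) * (- q) ^+ i * (- u) ^+ j.
have S1 : \sum_(xi < p ^ N.+1) f xi * (- q) ^+ xi = S * g (- u) p + Err.
  rewrite expnSr (blocks (fun k => f k * (- q) ^+ k)) /S /Err /g mulr_sumr -big_split /=.
  apply: eq_bigr => j _; rewrite mulr_suml -big_split /=.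
  apply: eq_bigr => i _; rewrite exprD exprM mq; ring.
have G : g (- u) p * (1 + u) = 1 + u ^+ p.
  have := g_sub1 (- u) p; rewrite exprNn -signr_odd hodd expr1 => h.
  transitivity (- ((- u - 1) * g (- u) p)); first by ring.
  by rewrite h; ring.
have qP : q ^+ (p ^ N.+1) = u ^+ p by rewrite expnSr exprM.
have hup : nK (u ^+ p - 1) < 1 by exact: (X_unit hK p hu).
have n1 := one_plus_neq0 hu; have n2 := one_plus_neq0 hup.
rewrite S1 qP.
have -> : (1 + q) / (1 + u ^+ p) * (S * g (- u) p + Err) - (1 + q) / (1 + u) * S
  = (1 + q) / (1 + u ^+ p) * Err.
  rewrite -G; field; by rewrite n1 -G mulf_eq0 negb_or n1 andbT in n2 *.
rewrite (nKM hK) (nKM hK) (nKV hK) (one_plus hq) (one_plus hup) invr1 !mul1r.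
apply: (nK_sum_le hK) => [|j _]; first by rewrite exprn_ge0 // c_ge0.
apply: (nK_sum_le hK) => [|i _]; first by rewrite exprn_ge0 // c_ge0.
rewrite !(nKM hK) nK_mqX (nKX hK) (nKN hK) (nK_unit hK hu) expr1n !mulr1.
exact: hf2.
Qed.

Lemma Bdiff N i : nK (Bsq f (N + i) - Bsq f N) <= c ^+ N.
Proof.
elim: i => [|i IH]; first by rewrite addn0 subrr (nK0 hK) exprn_ge0 // c_ge0.
apply: (nK_tri hK _ IH).
rewrite addnS; apply: le_trans (Bstep _) _; apply: c_mono; exact: leq_addr.
Qed.

Lemma B_cvg : cvg_to nK (Bsq f) (limK nK (Bsq f)).
Proof.
rewrite /limK; apply: (epsilon_spec (inhabits 0) (cvg_to nK (Bsq f))).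
apply: (Cp_complete hK) => e e0.
have [N hN] := pow_small c_ge0 c_lt1 e0.
exists N => m k hm hk; apply: le_lt_trans hN.
rewrite -(subnKC hm) -(subnKC hk).
apply: (nK_tri hK (Bdiff N (m - N))).
by rewrite (nKB hK); apply: Bdiff.
Qed.
End Fint.


Section Lim.
Variables (R : realType) (K : fieldType) (nK : K -> R) (p : nat).
Hypothesis hK : Cp_like nK p.

Lemma cvg_unique u l1 l2 : cvg_to nK u l1 -> cvg_to nK u l2 -> l1 = l2.
Proof.
move=> h1 h2; apply: (small_eq hK) => e e0.
have [N1 hN1] := h1 e e0; have [N2 hN2] := h2 e e0.
have a1 := hN1 (maxn N1 N2) (leq_maxl _ _); have a2 := hN2 (maxn N1 N2) (leq_maxr _ _).
by apply: (nK_tri_lt hK) a2; rewrite (nKB hK).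
Qed.

Lemma lim_rel (A B : nat -> K) (c0 lB : K) : nK c0 <= 1 -> cvg_to nK B lB ->
  (forall e : R, 0 < e -> exists N0, forall N, (N0 <= N)%N -> nK (A N - c0 * B N) < e) ->
  limK nK A = c0 * lB.
Proof.
move=> hc hB hAB.
have hA : cvg_to nK A (c0 * lB).
  move=> e e0; have [N1 hN1] := hAB e e0; have [N2 hN2] := hB e e0.
  exists (maxn N1 N2) => m hm.
  have a1 := hN1 m (leq_trans (leq_maxl _ _) hm).
  have a2 := hN2 m (leq_trans (leq_maxr _ _) hm).
  have -> : A m - c0 * lB = (A m - c0 * B m) + c0 * (B m - lB) by ring.
  apply: le_lt_trans (nKD hK _ _) _; rewrite gt_max a1 /= (nKM hK).
  apply: le_lt_trans a2; apply: ler_piMl; [exact: (nK_ge0 hK _) | exact: hc].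
symmetry; apply: (cvg_unique hA); rewrite /limK.
apply: (epsilon_spec (inhabits 0) (cvg_to nK A)); by exists (c0 * lB).
Qed.

End Lim.



Lemma expr_split (K : fieldType) (z : K) a b0 : z != 0 -> (b0 <= a)%N ->
  z ^+ (a - b0) = z ^+ a * (z^-1) ^+ b0.
Proof. by move=> z0 hb; rewrite exprB ?unitfE // exprVn. Qed.

Section Main.
Variables (R : realType) (K : fieldType) (nK : K -> R) (p : nat).
Hypothesis hp : prime p.
Hypothesis hodd : odd p.
Hypothesis hK : Cp_like nK p.

Lemma powdiff (a b : K) m : nK a <= 1 -> nK b <= 1 -> nK (a ^+ m - b ^+ m) <= nK (a - b).
Proof.
move=> ha hb; rewrite subrXX (nKM hK) ler_piMr ?(nK_ge0 hK) //.
apply: (nK_sum_le hK) => // i _; rewrite (nKM hK) !(nKX hK).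
by apply: mulr_ile1; rewrite ?exprn_ge0 ?(nK_ge0 hK) // exprn_ile1 ?(nK_ge0 hK).
Qed.

Variable q : K.
Hypothesis hq : nK (q - 1) < 1.
Variables (alpha h n : nat) (x : K).
Hypothesis hh : (0 < h)%N.
Hypothesis hx : in_Zp nK x.

Let b := nK (q - 1).
Let c := cc p b.
Let r := q^-1.
Let s := q ^+ alpha.

Lemma q0 : q != 0. Proof. exact: (unit_neq0 hK hq). Qed.
Lemma hs : nK (s - 1) <= b. Proof. exact: (Xsub1_le hK alpha hq). Qed.
Lemma hs1 : nK (s - 1) < 1. Proof. exact: (le_lt_trans hs hq). Qed.
Lemma hr : nK (r - 1) <= b. Proof. by rewrite /r (nK_inv_sub1 hK hq). Qed.
Lemma hsi : nK (s^-1 - 1) <= b. Proof. by rewrite (nK_inv_sub1 hK hs1) hs. Qed.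
Lemma hsi1 : nK (s^-1 - 1) < 1. Proof. exact: (le_lt_trans hsi hq). Qed.
Lemma rs : r ^+ alpha = s^-1. Proof. by rewrite /r /s exprVn. Qed.
Lemma nqX m : nK (q ^+ m) = 1. Proof. by rewrite (nKX hK) (nK_unit hK hq) expr1n. Qed.
Lemma nmqX m : nK ((- q) ^+ m) = 1. Proof. by rewrite (nKX hK) (nKN hK) (nK_unit hK hq) expr1n. Qed.

Definition fB (xi : nat) : K := q ^+ ((h - 1) * xi) * qnum nK s (x + xi%:R) ^+ n.

Lemma fB1 xi : nK (fB xi) <= 1.
Proof.
rewrite /fB (nKM hK) nqX mul1r (nKX hK) exprn_ile1 ?(nK_ge0 hK) //.
exact: (qnum_le1 hp hK hs1 (in_Zp_addn xi hx)).
Qed.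

Lemma fB2 N xi j : nK (fB (xi + p ^ N * j)%N - fB xi) <= c ^+ N.
Proof.
set P := (p ^ N)%N.
set Q1 := qnum nK s (x + (xi + P * j)%:R); set Q0 := qnum nK s (x + xi%:R).
have -> : fB (xi + P * j) - fB xi = q ^+ ((h - 1) * xi) * ((q ^+ P) ^+ ((h - 1) * j) - 1) * Q1 ^+ n
     + q ^+ ((h - 1) * xi) * (Q1 ^+ n - Q0 ^+ n).
  rewrite /fB -/Q1 -/Q0 mulnDr exprD [((h - 1) * (P * j))%N]mulnCA [q ^+ (P * _)]exprM; ring.
have hy := in_Zp_addn xi hx.
have hy1 : in_Zp nK (x + (xi + P * j)%:R).
  by rewrite natrD addrA; apply: in_Zp_addn.
have hQ1 : nK Q1 <= 1 := qnum_le1 hp hK hs1 hy1.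
apply: (nKD_le hK).
  rewrite !(nKM hK) nqX mul1r (nKX hK).
  apply: le_trans (_ : _ <= nK ((q ^+ P) ^+ ((h - 1) * j) - 1)) _.
    apply: ler_piMr; [exact: (nK_ge0 hK _) | ].
    by rewrite exprn_ile1 ?(nK_ge0 hK).
  apply: le_trans (Xsub1_le hK _ (X_unit hK P hq)) _.
  exact: (XpN_sub1 hp hK (lexx b) hq N).
rewrite (nKM hK) nqX mul1r.
apply: le_trans (powdiff _ _ _) _.
- exact: hQ1.
- exact: (qnum_le1 hp hK hs1 hy).
rewrite /Q1 natrD addrA.
apply: le_trans (qnum_shift hp hK hs1 (P * j) hy) _.
apply: le_trans (g_mul_le hK hs hq P j) _.
exact: (g_pX_bound hp hK hs hq N).
Qed.


Definition Aseq (N : nat) : K := (1 + r) / (1 + r ^+ (p ^ N)) *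
  \sum_(xi < p ^ N) (r ^+ ((h - 1) * xi) * qnum nK (r ^+ alpha) (1 - x + xi%:R) ^+ n) * (- r) ^+ xi.

Definition c0 : K := (-1) ^+ n * q ^+ (h + alpha * n - 1).

Lemma c0E : c0 = q ^+ (h - 1) * (- s) ^+ n.
Proof.
rewrite /c0 /s [(- q ^+ alpha) ^+ n]exprNn.
have -> : (h + alpha * n - 1 = (h - 1) + alpha * n)%N by lia.
by rewrite exprD exprM; ring.
Qed.

Lemma nc0 : nK c0 <= 1.
Proof. by rewrite /c0 (nKM hK) !(nKX hK) (nKN1 hK) (nK_unit hK hq) !expr1n mul1r. Qed.

Lemma AB_bound N : nK (Aseq N - c0 * Bsq p q fB N) <= c ^+ N.
Proof.
set P := (p ^ N)%N.
have P0 : (0 < P)%N by rewrite /P expn_gt0 prime_gt0.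
have Podd : odd P by rewrite /P oddX hodd orbT.
have r0 : r != 0 by rewrite /r invr_eq0 q0.
set a := fun eta : nat => q ^+ ((h - 1) * eta) * (- q) ^+ eta.
set Qp := fun eta : nat => qnum nK (s^-1) (P%:R - (x + eta%:R)).
set Q := fun eta : nat => qnum nK s (x + eta%:R).
set W0 := r ^+ ((h - 1) * (P - 1)) * (- r) ^+ (P - 1).
have Aeq : \sum_(xi < P) (r ^+ ((h - 1) * xi) * qnum nK (r ^+ alpha) (1 - x + xi%:R) ^+ n) * (- r) ^+ xi
    = W0 * \sum_(i < P) a i * Qp i ^+ n.
  rewrite (reindex_inj rev_ord_inj) /= mulr_sumr; apply: eq_bigr => i _ /=.
  have hi : (i < P)%N := ltn_ord i.
  move: (nat_of_ord i) hi => eta hi.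
  have arg : 1 - x + (P - eta.+1)%:R = P%:R - (x + eta%:R).
    by rewrite natrB // -addn1 natrD; ring.
  have e0 : (P - eta.+1 = (P - 1) - eta)%N by lia.
  have e1 : r ^+ ((h - 1) * (P - eta.+1)) = r ^+ ((h - 1) * (P - 1)) * q ^+ ((h - 1) * eta).
    rewrite e0 mulnBr expr_split //; first by rewrite /r invrK.
    by apply: leq_mul => //; lia.
  have e2 : (- r) ^+ (P - eta.+1) = (- r) ^+ (P - 1) * (- q) ^+ eta.
    rewrite e0 expr_split ?oppr_eq0 //; first by rewrite invrN /r invrK.
    lia.
  rewrite e1 e2 arg rs /W0 /a /Qp; ring.
have Beq : \sum_(xi < P) fB xi * (- q) ^+ xi = \sum_(i < P) a i * Q i ^+ n.
  by apply: eq_bigr => i _; rewrite /fB /a /Q; ring.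
set u := q ^+ P.
have hu : nK (u - 1) < 1 by exact: (X_unit hK P hq).
have u0 : u != 0 by rewrite /u expf_neq0 // q0.
have nu1 := one_plus_neq0 hodd hK hu.
set F := (1 + q) / (1 + u).
have Wid : (1 + r) / (1 + r ^+ P) * W0 = F * q ^+ (h - 1) * (r ^+ P) ^+ (h - 1).
  have hrP : r ^+ P = u^-1 by rewrite /r exprVn.
  have hrP1 : r ^+ (P - 1) = u^-1 * q by rewrite expr_split // expr1 hrP /r invrK.
  have hmr : (- r) ^+ (P - 1) = r ^+ (P - 1).
    by rewrite exprNn -signr_odd oddB // Podd /= mul1r.
  rewrite /W0 mulnC exprM hmr hrP1 hrP exprMn /F /r.
  set A := (u^-1) ^+ (h - 1); set B := q ^+ (h - 1).
  by field; rewrite nu1 u0 q0.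
have hr1 : nK (r - 1) < 1 := le_lt_trans hr hq.
rewrite /Aseq -/P Aeq mulrA Wid /Bsq -/P Beq -/u -/F c0E.
set W := F * q ^+ (h - 1) * (r ^+ P) ^+ (h - 1).
have -> : W * (\sum_(i < P) a i * Qp i ^+ n) - q ^+ (h - 1) * (- s) ^+ n * (F * \sum_(i < P) a i * Q i ^+ n)
   = \sum_(i < P) a i * (W * (Qp i ^+ n - (- s * Q i) ^+ n) + (W - F * q ^+ (h - 1)) * (- s * Q i) ^+ n).
  rewrite !mulr_sumr -sumrB; apply: eq_bigr => i _; rewrite exprMn; ring.
have nF : nK F = 1.
  by rewrite /F (nKM hK) (nKV hK) (one_plus hodd hK hq) (one_plus hodd hK hu) invr1 mul1r.
have nW : nK W <= 1.
  rewrite /W (nKM hK) (nKM hK) nF nqX (nKX hK) (nKX hK) (nK_unit hK hr1) !expr1n !mul1r //.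
have dW : nK (W - F * q ^+ (h - 1)) <= c ^+ N.
  have -> : W - F * q ^+ (h - 1) = F * q ^+ (h - 1) * ((r ^+ P) ^+ (h - 1) - 1) by rewrite /W; ring.
  rewrite (nKM hK) (nKM hK) nF nqX !mul1r.
  apply: le_trans (Xsub1_le hK _ (X_unit hK P hr1)) _.
  exact: (XpN_sub1 hp hK hr hq N).
have hc0 : 0 <= c ^+ N by rewrite exprn_ge0 // (cc_ge0 hp b).
apply: (nK_sum_le hK) => // i _.
have hy := in_Zp_addn i hx.
have hQ : nK (Q i) <= 1 := qnum_le1 hp hK hs1 hy.
have hQp : nK (Qp i) <= 1 := qnum_le1 hp hK hsi1 (in_Zp_natB hp hK P hy).
have hsQ : nK (- s * Q i) <= 1.
  by rewrite mulNr (nKN hK) (nKM hK) (nK_unit hK hs1) mul1r.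
have hsQn : nK ((- s * Q i) ^+ n) <= 1 by rewrite (nKX hK) exprn_ile1 ?(nK_ge0 hK).
rewrite (nKM hK) /a (nKM hK) nqX nmqX !mul1r.
apply: (nKD_le hK); rewrite (nKM hK).
  apply: le_trans (ler_piMl (nK_ge0 hK _) nW) _.
  apply: le_trans (powdiff n hQp hsQ) _.
  rewrite mulNr opprK.
  apply: le_trans (qnum_refl hp hK hs1 P hy) _.
  exact: (g_pX_bound hp hK hsi hq N).
by apply: le_trans (ler_piMr (nK_ge0 hK _) hsQn) _.
Qed.

End Main.


Theorem mainTheorem2 (R : realType) (K : fieldType) (nK : K -> R) (p : nat)
  (hp : prime p) (hodd : odd p) (hK : Cp_like nK p)
  (q : K) (hq : nK (q - 1) < 1) (alpha h : nat) (hh : (0 < h)%N)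
  (n : nat) (x : K) (hx : in_Zp nK x) :
  Gt nK p q^-1 alpha h n (1 - x) =
  (-1) ^+ n * q ^+ (h + alpha * n - 1) * Gt nK p q alpha h n x.
Proof.
rewrite /Gt; set FA := fint nK p q^-1 _; set FB := fint nK p q _.
suff key : FA = (-1) ^+ n * q ^+ (h + alpha * n - 1) * FB by rewrite key; ring.
rewrite /FA /FB /fint.
change (limK nK (Aseq nK p q alpha h n x) = (-1) ^+ n * q ^+ (h + alpha * n - 1) * limK nK (Bsq p q (fB nK q alpha h n x))).
have HB := B_cvg hp hodd hK hq (fB2 hp hK hq alpha h n hx).
have HC := nc0 hK hq alpha h n.
rewrite /c0 in HC.
apply: (lim_rel hK HC HB).
move=> e e0.
have [N0 hN0] := pow_small (cc_ge0 hp (nK (q - 1))) (cc_lt1 hp hq) e0.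
exists N0 => N hN.
apply: le_lt_trans (AB_bound hp hodd hK hq alpha n hh hx N) _.
apply: le_lt_trans hN0.
by rewrite ler_wiXn2l // ?(cc_ge0 hp) // ltW // (cc_lt1 hp hq).
Qed.
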